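(* Fix parameters $0<\varepsilon<f<(1+\varepsilon)/2<1$ and $\sigma>0$. Let $pqr$ be a non-degenerate triangle in $\mathbb{R}^2$ with one of its vertices designated as apex and an ordering of the two other (base) vertices, and let $\tau(p),\tau(q),\tau(r)$ be real values with $\tau(p)\le\tau(q)\le\tau(r)$ such that $\|\nabla\tau\|<\sigma$ and the triangle satisfies the adaptive progress constraint $\sigma$. Let $d_p:=\operatorname{dist}(p,\operatorname{aff}(qr))$. Then for every $\delta\in[0,\varepsilon\,\sigma\,d_p]$, the affine function $\tau'$ with $\tau'(p)=\tau(p)+\delta$, $\tau'(q)=\tau(q)$, $\tau'(r)=\tau(r)$ satisfies $\|\nabla\tau'\|<\sigma$.
   Context: Values at the vertices of a triangle are extended to the unique affine function on $\mathbb{R}^2$, also denoted $\tau$; $\nabla\tau$ is its gradient. Diminished width: for a triangle written $abc$ with its apex listed first (here $a$), $\mathrm{dw}(abc):=\min\{(1-\varepsilon)\operatorname{dist}(a,\operatorname{aff}(bc)),\,(1-f)\operatorname{dist}(b,\operatorname{aff}(ac)),\,(1-f)\operatorname{dist}(c,\operatorname{aff}(ab))\}$ (symmetric in $b,c$). Adaptive progress constraint $\sigma$: for a triangle with apex $a$ and base vertices $b,c$ (in the given order), let $d$ be the midpoint of $bc$ and $e$ the midpoint of $ac$, with $\tau(d),\tau(e)$ the values of the affine function there; the triangle satisfies the constraint iff $|\tau(a)-\tau(b)|\le 2\,\mathrm{dw}(dca)\,\sigma$, $|\tau(a)-\tau(d)|\le\mathrm{dw}(abc)\,\sigma$, $|\tau(a)-\tau(c)|\le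 2\,\mathrm{dw}(dab)\,\sigma$, and $|\tau(b)-\tau(c)|\le 4\,\mathrm{dw}(ead)\,\sigma$ (in each $\mathrm{dw}$ the first-listed vertex is the apex of that smaller triangle). *)

(* Defs.v *)
From Stdlib Require Import Reals Lra.
Open Scope R_scope.

Definition pt := (R * R)%type.

Definition vsub (x y : pt) : pt := (fst x - fst y, snd x - snd y).
Definition dot (u v : pt) : R := fst u * fst v + snd u * snd v.
Definition cross (u v : pt) : R := fst u * snd v - snd u * fst v.
Definition vnorm (u : pt) : R := sqrt (dot u u).
Definition midpoint (x y : pt) : pt := ((fst x + fst y) / 2, (snd x + snd y) / 2).

(* twice the signed area; the triangle abc is non-degenerate iff this is nonzero *)
Definition area2 (a b c : pt) : R := cross (vsub b a) (vsub c a).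

(* Gradient of the unique affine function on R^2 taking values ta, tb, tc at
   the vertices a, b, c of a non-degenerate triangle (Cramer's rule):
   it is the unique g with g.(b-a) = tb-ta and g.(c-a) = tc-ta. *)
Definition grad (a b c : pt) (ta tb tc : R) : pt :=
  let D := area2 a b c in
  let u := vsub b a in let v := vsub c a in
  (((tb - ta) * snd v - (tc - ta) * snd u) / D,
   ((tc - ta) * fst u - (tb - ta) * fst v) / D).

Definition aff_eval (a b c : pt) (ta tb tc : R) (x : pt) : R :=
  ta + dot (grad a b c ta tb tc) (vsub x a).

(* dist(x, aff(yz)) for y <> z *)
Definition dist_line (x y z : pt) : R :=
  Rabs (cross (vsub z y) (vsub x y)) / vnorm (vsub z y).

Definition dw (eps f : R) (a b c : pt) : R :=
  Rmin ((1 - eps) * dist_line a b c)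
       (Rmin ((1 - f) * dist_line b a c) ((1 - f) * dist_line c a b)).

(* adaptive progress constraint sigma for triangle with apex a, base b, c
   (in this order), with vertex values ta, tb, tc *)
Definition progress (eps f sigma : R) (a b c : pt) (ta tb tc : R) : Prop :=
  let d := midpoint b c in
  let e := midpoint a c in
  let td := aff_eval a b c ta tb tc d in
  Rabs (ta - tb) <= 2 * dw eps f d c a * sigma /\
  Rabs (ta - td) <= dw eps f a b c * sigma /\
  Rabs (ta - tc) <= 2 * dw eps f d a b * sigma /\
  Rabs (tb - tc) <= 4 * dw eps f e a d * sigma.

Definition progress_some_designation (eps f sigma : R) (p q r : pt)
    (tp tq tr : R) : Prop :=
  progress eps f sigma p q r tp tq tr \/ progress eps f sigma p r q tp tr tq \/
  progress eps f sigma q p r tq tp tr \/ progress eps f sigma q r p tq tr tp \/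
  progress eps f sigma r p q tr tp tq \/ progress eps f sigma r q p tr tq tp.

(* Main.v *)
Require Import Defs.
From Stdlib Require Import Reals Lra Psatz.
Open Scope R_scope.


Lemma normB0 (K e a b w : R) : 0 < K -> 0 < e -> a <= w -> w - a <= K -> 0 <= b ->
  w*w + b*b <= K*K -> (b = 0 -> w <= 0) -> -e/2 < a -> (a+e)*(a+e) + b*b < (K+e)*(K+e).
Proof. intros HK He H1 H2 Hb Hw Hb0 Ha.
  assert (HwK : w < K). { destruct (Rle_or_lt K w); [|lra]. exfalso.
    assert (b*b <= 0) by nra. assert (b = 0) by nra. specialize (Hb0 H3). lra. }
  destruct (Rle_or_lt 0 (a+w)).
  - assert ((a-w)*(a+w) <= 0) by nra. nra.
  - assert ((w-a)*(-a-w) <= K*(-a-w)) by nra.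
    assert (a*(e-K) < e*K).
    { destruct (Rle_or_lt K e). nra. nra. }
    nra.
Qed.

Lemma normA0 (K e a b : R) : 0 < K -> 0 < e -> a <= 0 -> b*b <= K*K -> -e/2 < a ->
  (a+e)*(a+e) + b*b < (K+e)*(K+e).
Proof. intros. nra. Qed.

Lemma tcase (K E a b t : R) : 0 < K -> 0 < E -> 0 <= t <= E -> a*a+b*b < (K+E)*(K+E) ->
  (0 < t -> -t/2 < a -> (a+t)*(a+t) + b*b < (K+t)*(K+t)) ->
  (a+t)*(a+t) + b*b < (K+E)*(K+E).
Proof. intros HK HE Ht Hg Hc.
  destruct (Rle_or_lt t 0). { assert (t = 0) by lra. subst t. nra. }
  destruct (Rle_or_lt a (-t/2)). { nra. }
  specialize (Hc H H0). nra.
Qed.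

Lemma normB (K E a b z h t : R) : 0 < K -> 0 < E -> 0 < h -> 0 <= t <= E ->
  a*h <= b*z -> b*z - a*h <= K*h -> 0 <= b -> b*b*(z*z+h*h) <= K*K*(h*h) ->
  a*a+b*b < (K+E)*(K+E) -> (a+t)*(a+t) + b*b < (K+E)*(K+E).
Proof. intros. apply tcase; auto. intros.
  apply (normB0 K t a b (b*z/h)); auto.
  - apply (Rmult_le_reg_r h); [lra|]. field_simplify; lra.
  - apply (Rmult_le_reg_r h); [lra|]. field_simplify; lra.
  - apply (Rmult_le_reg_r (h*h)); [nra|].
    replace ((b*z/h*(b*z/h) + b*b)*(h*h)) with (b*b*(z*z+h*h)) by (field; repeat split; intro; nra). nra.
  - intros ->. replace (0*z/h) with 0 by (field; repeat split; intro; nra). lra.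
Qed.

Lemma normA (K E a b t : R) : 0 < K -> 0 < E -> 0 <= t <= E ->
  a <= 0 -> b*b <= K*K -> a*a+b*b < (K+E)*(K+E) -> (a+t)*(a+t) + b*b < (K+E)*(K+E).
Proof. intros. apply tcase; auto. intros. apply normA0; auto. Qed.


Lemma div_nonneg (x y : R) : 0 <= x -> 0 < y -> 0 <= x / y.
Proof. intros. unfold Rdiv. apply Rmult_le_pos; [lra| left; apply Rinv_0_lt_compat; lra]. Qed.

Lemma scale_lt (L A B T S : R) : 0 < L ->
  (A/L+T/L)*(A/L+T/L) + (B/L)*(B/L) < S*S -> (A+T)*(A+T)+B*B < (S*L)*(S*L).
Proof. intros HL H.
  replace ((A+T)*(A+T)+B*B) with (((A/L+T/L)*(A/L+T/L) + (B/L)*(B/L))*(L*L)) by (field; repeat split; intro; nra).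
  replace ((S*L)*(S*L)) with ((S*S)*(L*L)) by ring. apply Rmult_lt_compat_r; nra. Qed.

Lemma scaledB (K E L H Z A B T : R) : 0 < K -> 0 < E -> 0 < L -> 0 < H -> 0 <= T <= E*L ->
  A*H <= B*Z -> B*Z - A*H <= K*H*L -> 0 <= B -> B*B*(Z*Z+H*H) <= K*K*(H*H)*(L*L) ->
  A*A+B*B < ((K+E)*L)*((K+E)*L) -> (A+T)*(A+T)+B*B < ((K+E)*L)*((K+E)*L).
Proof. intros HK HE HL HH HT H1 H2 H3 H4 H5. apply scale_lt; auto.
  assert (HL2 : 0 < L*L) by nra.
  apply (normB K E (A/L) (B/L) (Z/L) (H/L) (T/L)); auto.
  - apply Rdiv_lt_0_compat; lra.
  - split. apply div_nonneg; lra.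
    apply (Rmult_le_reg_r L); auto. field_simplify; lra.
  - apply (Rmult_le_reg_r (L*L)); auto. field_simplify; lra.
  - apply (Rmult_le_reg_r (L*L)); auto. field_simplify; nra.
  - apply div_nonneg; lra.
  - apply (Rmult_le_reg_r ((L*L)*(L*L))); [nra|].
    replace (B/L*(B/L)*(Z/L*(Z/L)+H/L*(H/L))*(L*L*(L*L))) with (B*B*(Z*Z+H*H)) by (field; repeat split; intro; nra).
    replace (K*K*(H/L*(H/L))*(L*L*(L*L))) with (K*K*(H*H)*(L*L)) by (field; repeat split; intro; nra). lra.
  - apply (Rmult_lt_reg_r (L*L)); auto.
    replace ((A/L*(A/L) + B/L*(B/L))*(L*L)) with (A*A+B*B) by (field; repeat split; intro; nra).
    replace ((K+E)*(K+E)*(L*L)) with (((K+E)*L)*((K+E)*L)) by ring. lra.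
Qed.

Lemma scaledA (K E L A B T : R) : 0 < K -> 0 < E -> 0 < L -> 0 <= T <= E*L ->
  A <= 0 -> B*B <= K*K*(L*L) ->
  A*A+B*B < ((K+E)*L)*((K+E)*L) -> (A+T)*(A+T)+B*B < ((K+E)*L)*((K+E)*L).
Proof. intros HK HE HL HT H1 H2 H5. apply scale_lt; auto.
  assert (HL2 : 0 < L*L) by nra.
  apply (normA K E (A/L) (B/L) (T/L)); auto.
  - split. apply div_nonneg; lra.
    apply (Rmult_le_reg_r L); auto. field_simplify; lra.
  - apply (Rmult_le_reg_r L); auto. field_simplify; lra.
  - apply (Rmult_le_reg_r (L*L)); auto.
    replace (B/L*(B/L)*(L*L)) with (B*B) by (field; repeat split; intro; nra). lra.
  - apply (Rmult_lt_reg_r (L*L)); auto.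
    replace ((A/L*(A/L) + B/L*(B/L))*(L*L)) with (A*A+B*B) by (field; repeat split; intro; nra).
    replace ((K+E)*(K+E)*(L*L)) with (((K+E)*L)*((K+E)*L)) by ring. lra.
Qed.


Lemma core (K E L H X Y A B T be ga : R) :
  0 < K -> 0 < E -> 0 < L -> 0 < H -> Y - X = L*L ->
  be*(L*L) = B*X - A*H -> ga - be = B ->
  0 <= be -> be <= ga ->
  A*A+B*B < ((K+E)*L)*((K+E)*L) -> 0 <= T <= E*L ->
  ((be*be*(Y*Y+H*H) <= K*K*(H*H)*(L*L) /\ ga*ga*(X*X+H*H) <= K*K*(H*H)*(L*L)) \/
   (be*be*(L*L) <= K*K*(H*H) /\ B*B*(X*X+H*H) <= K*K*(H*H)*(L*L)) \/
   (ga*ga*(L*L) <= K*K*(H*H) /\ B*B*(Y*Y+H*H) <= K*K*(H*H)*(L*L))) ->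
  (A+T)*(A+T)+B*B < ((K+E)*L)*((K+E)*L).
Proof. intros HK HE HL HH HXY Hbe HB Hb0 Hbg Hg HT Hc.
  assert (HL2 : 0 < L*L) by nra.
  assert (Hga : ga*(L*L) = B*Y - A*H) by nra.
  assert (HB0 : 0 <= B) by lra.
  assert (HBg : B <= ga) by lra.
  assert (Hsq : forall s, 0 <= s -> s*s*(L*L) <= K*K*(H*H) -> s*L <= K*H).
  { intros s Hs Hss. destruct (Rle_or_lt (s*L) (K*H)); auto.
    assert (0 <= K*H) by nra. nra. }
  destruct Hc as [[H1 H2]|[[H1 H2]|[H1 H2]]].
  - assert (HBB : B*B*(X*X+H*H) <= K*K*(H*H)*(L*L)).
    { assert (B*B <= ga*ga) by nra. nra. }
    destruct (Rlt_or_le 0 X) as [HX|HX].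
    + apply (scaledB K E L H X); auto.
      * nra.
      * assert (be*L <= K*H).
        { apply Hsq; auto. assert (L*L <= Y) by lra.
          assert ((L*L)*(L*L) <= Y*Y) by nra.
          assert (be*be*((L*L)*(L*L)) <= K*K*(H*H)*(L*L)) by nra.
          apply (Rmult_le_reg_r (L*L)); auto. nra. }
        assert (B*X - A*H = be*L*L) by (rewrite <- Hbe; ring). nra.
    + destruct (Rle_or_lt 0 Y) as [HY|HY].
      * apply (scaledA K E L A B T); auto.
        { assert (A*H*(L*L) = (ga*X - be*Y)*(L*L)).
          { replace ((ga*X - be*Y)*(L*L)) with ((ga*(L*L))*X - (be*(L*L))*Y) by ring. rewrite Hga, Hbe, <- HXY. ring. }
          assert (A*H = ga*X - be*Y) by (apply (Rmult_eq_reg_r (L*L)); nra).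
          assert (A*H <= 0) by nra. nra. }
        { assert (B*B*(H*H) <= K*K*(H*H)*(L*L)) by nra. 
          apply (Rmult_le_reg_r (H*H)); nra. }
      * apply (scaledB K E L H Y); auto.
        -- nra.
        -- assert (ga*L <= K*H).
           { apply Hsq; [lra|]. assert (X <= -(L*L)) by lra.
             assert ((L*L)*(L*L) <= X*X) by nra.
             assert (ga*ga*((L*L)*(L*L)) <= K*K*(H*H)*(L*L)) by nra.
             apply (Rmult_le_reg_r (L*L)); auto. nra. }
           assert (B*Y - A*H = ga*L*L) by (rewrite <- Hga; ring). nra.
        -- assert (Y*Y <= X*X) by nra. nra.
  - apply (scaledB K E L H X); auto.
    + nra.
    + assert (be*L <= K*H) by (apply Hsq; auto).
      assert (B*X - A*H = be*L*L) by (rewrite <- Hbe; ring). nra.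
  - apply (scaledB K E L H Y); auto.
    + nra.
    + assert (ga*L <= K*H) by (apply Hsq; lra).
      assert (B*Y - A*H = ga*L*L) by (rewrite <- Hga; ring). nra.
Qed.


Lemma vnorm_sq (u : pt) : vnorm u * vnorm u = dot u u.
Proof. unfold vnorm, dot. rewrite sqrt_sqrt; [lra|nra]. Qed.

Lemma vnorm_nonneg (u : pt) : 0 <= vnorm u.
Proof. unfold vnorm. apply sqrt_pos. Qed.

Lemma sq_bound (x n M : R) : 0 <= n -> 0 <= M -> Rabs x * n <= M -> x*x*(n*n) <= M*M.
Proof. intros Hn HM H. assert (0 <= Rabs x) by apply Rabs_pos.
  assert (Rabs x * n * (Rabs x * n) <= M*M) by (apply Rmult_le_compat; nra).
  replace (x*x) with (Rabs x * Rabs x). replace (Rabs x * Rabs x * (n*n)) with (Rabs x * n * (Rabs x * n)) by ring. lra.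
  rewrite <- Rabs_mult. apply Rabs_pos_eq. nra. Qed.

Lemma dist_mid1 (A B C : pt) :
  Rabs (cross (vsub A C) (vsub (midpoint B C) C)) = Rabs (area2 A B C) / 2.
Proof. destruct A as [a1 a2], B as [b1 b2], C as [c1 c2].
  unfold cross, vsub, midpoint, area2; simpl.
  replace ((a1 - c1) * ((b2 + c2) / 2 - c2) - (a2 - c2) * ((b1 + c1) / 2 - c1))
    with (((b1 - a1) * (c2 - a2) - (b2 - a2) * (c1 - a1)) / 2) by field.
  unfold Rdiv. rewrite Rabs_mult. rewrite (Rabs_pos_eq (/2)); [reflexivity|left; apply Rinv_0_lt_compat; lra]. Qed.

Lemma dist_mid3 (A B C : pt) :
  Rabs (cross (vsub B A) (vsub (midpoint B C) A)) = Rabs (area2 A B C) / 2.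
Proof. destruct A as [a1 a2], B as [b1 b2], C as [c1 c2].
  unfold cross, vsub, midpoint, area2; simpl.
  replace ((b1 - a1) * ((b2 + c2) / 2 - a2) - (b2 - a2) * ((b1 + c1) / 2 - a1))
    with (((b1 - a1) * (c2 - a2) - (b2 - a2) * (c1 - a1)) / 2) by field.
  unfold Rdiv. rewrite Rabs_mult. rewrite (Rabs_pos_eq (/2)); [reflexivity|left; apply Rinv_0_lt_compat; lra]. Qed.

Lemma prog_sq (eps f sigma : R) (A B C : pt) (tA tB tC : R) :
  0 < sigma -> eps < 1 -> 0 < vnorm (vsub A C) -> 0 < vnorm (vsub B A) ->
  progress eps f sigma A B C tA tB tC ->
  (tA-tB)*(tA-tB)*dot (vsub A C) (vsub A C) <= ((1-eps)*sigma)*((1-eps)*sigma)*(area2 A B C * area2 A B C) /\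
  (tA-tC)*(tA-tC)*dot (vsub B A) (vsub B A) <= ((1-eps)*sigma)*((1-eps)*sigma)*(area2 A B C * area2 A B C).
Proof. intros Hs He HAC HBA [H1 [_ [H3 _]]].
  assert (Hsq : area2 A B C * area2 A B C = Rabs (area2 A B C) * Rabs (area2 A B C)).
  { rewrite <- Rabs_mult. rewrite Rabs_pos_eq; nra. }
  assert (HR := Rabs_pos (area2 A B C)).
  split.
  - rewrite <- vnorm_sq.
    assert (Hd : dw eps f (midpoint B C) C A <= (1-eps) * dist_line (midpoint B C) C A)
      by (unfold dw; apply Rmin_l).
    unfold dist_line in Hd. rewrite dist_mid1 in Hd.
    assert (Rabs (tA - tB) * vnorm (vsub A C) <= (1-eps)*sigma*Rabs (area2 A B C)).
    { assert (Rabs (tA-tB) <= 2 * ((1-eps) * (Rabs (area2 A B C) / 2 / vnorm (vsub A C))) * sigma) by nra.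
      apply (Rmult_le_compat_r (vnorm (vsub A C))) in H; [|lra].
      replace (2 * ((1 - eps) * (Rabs (area2 A B C) / 2 / vnorm (vsub A C))) * sigma * vnorm (vsub A C)) with ((1-eps)*sigma*Rabs (area2 A B C)) in H by (field; lra). lra. }
    rewrite Hsq. replace (((1-eps)*sigma)*((1-eps)*sigma)*(Rabs (area2 A B C) * Rabs (area2 A B C))) with (((1-eps)*sigma*Rabs (area2 A B C))*((1-eps)*sigma*Rabs (area2 A B C))) by ring.
    apply sq_bound; [lra| apply Rmult_le_pos; [apply Rmult_le_pos; lra| lra] |auto].
  - rewrite <- vnorm_sq.
    assert (Hd : dw eps f (midpoint B C) A B <= (1-eps) * dist_line (midpoint B C) A B)
      by (unfold dw; apply Rmin_l).
    unfold dist_line in Hd. rewrite dist_mid3 in Hd.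
    assert (Rabs (tA - tC) * vnorm (vsub B A) <= (1-eps)*sigma*Rabs (area2 A B C)).
    { assert (Rabs (tA-tC) <= 2 * ((1-eps) * (Rabs (area2 A B C) / 2 / vnorm (vsub B A))) * sigma) by nra.
      apply (Rmult_le_compat_r (vnorm (vsub B A))) in H; [|lra].
      replace (2 * ((1 - eps) * (Rabs (area2 A B C) / 2 / vnorm (vsub B A))) * sigma * vnorm (vsub B A)) with ((1-eps)*sigma*Rabs (area2 A B C)) in H by (field; lra). lra. }
    rewrite Hsq. replace (((1-eps)*sigma)*((1-eps)*sigma)*(Rabs (area2 A B C) * Rabs (area2 A B C))) with (((1-eps)*sigma*Rabs (area2 A B C))*((1-eps)*sigma*Rabs (area2 A B C))) by ring.
    apply sq_bound; [lra| apply Rmult_le_pos; [apply Rmult_le_pos; lra| lra] |auto].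
Qed.


Lemma pair_pos (a b : R) : ~(a = 0 /\ b = 0) -> 0 < a*a+b*b.
Proof. intros H. destruct (Req_dec a 0); destruct (Req_dec b 0); try tauto; nra. Qed.

Lemma conv (c c' s S N M : R) : 0 <= N -> c*c = c'*c' -> c*c*s <= M -> s*N = S -> c'*c'*S <= M*N.
Proof. intros HN Hc H HS. rewrite <- HS, <- Hc. replace (c*c*(s*N)) with ((c*c*s)*N) by ring.
  apply Rmult_le_compat_r; auto. Qed.

Lemma conv' (c c' s S N M : R) : c*c*s <= M -> s*N = S -> 0 <= N -> c*c = c'*c' -> c'*c'*S <= M*N.
Proof. intros. apply (conv c c' s S N M); auto. Qed.

Theorem mainTheorem7 (eps f sigma : R) (p q r : pt) (tp tq tr : R) :
  0 < eps -> eps < f -> f < (1 + eps) / 2 -> (1 + eps) / 2 < 1 ->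
  0 < sigma ->
  area2 p q r <> 0 ->
  tp <= tq -> tq <= tr ->
  vnorm (grad p q r tp tq tr) < sigma ->
  progress_some_designation eps f sigma p q r tp tq tr ->
  forall delta : R,
    0 <= delta -> delta <= eps * sigma * dist_line p q r ->
    vnorm (grad p q r (tp + delta) tq tr) < sigma.
Proof.
  intros He Hef Hf Hf1 Hs HD0 H12 H23 Hg Hprog delta Hd0 Hd1.
  assert (He1 : eps < 1) by lra.
  set (K := (1-eps)*sigma). set (E := eps*sigma).
  assert (HK : 0 < K) by (unfold K; nra). assert (HE : 0 < E) by (unfold E; nra).
  destruct p as [p1 p2], q as [q1 q2], r as [r1 r2].
  set (D := (q1-p1)*(r2-p2) - (q2-p2)*(r1-p1)).
  assert (HDd : area2 (p1,p2) (q1,q2) (r1,r2) = D) by reflexivity.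
  rewrite HDd in HD0.
  set (e1 := r1-q1). set (e2 := r2-q2). set (N := e1*e1+e2*e2).
  assert (HN : 0 < N).
  { unfold N. apply pair_pos. intros [Ha Hb]. apply HD0. unfold D.
    unfold e1, e2 in *. replace r1 with q1 by lra. replace r2 with q2 by lra. ring. }
  set (L := sqrt N). assert (HL : 0 < L) by (apply sqrt_lt_R0; auto).
  assert (HLL : L*L = N) by (apply sqrt_sqrt; lra).
  set (H := Rabs D). assert (HH : 0 < H) by (apply Rabs_pos_lt; auto).
  assert (HHH : H*H = D*D).
  { unfold H. rewrite <- Rabs_mult. apply Rabs_pos_eq. nra. }
  set (be := tq - tp). set (ga := tr - tp).
  set (G1 := (be*(r2-p2) - ga*(q2-p2))/D). set (G2 := (ga*(q1-p1) - be*(r1-p1))/D).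
  assert (Hgr : grad (p1,p2) (q1,q2) (r1,r2) tp tq tr = (G1,G2)) by reflexivity.
  assert (Fu : G1*(q1-p1) + G2*(q2-p2) = be) by (unfold G1, G2, D in *; field; auto).
  assert (Fv : G1*(r1-p1) + G2*(r2-p2) = ga) by (unfold G1, G2, D in *; field; auto).
  set (X := (q1-p1)*e1 + (q2-p2)*e2). set (Y := (r1-p1)*e1 + (r2-p2)*e2).
  set (Pg := -G1*e2 + G2*e1). set (Bg := G1*e1 + G2*e2).
  assert (HBg : Bg = ga - be) by (rewrite <- Fu, <- Fv; unfold Bg, e1, e2; ring).
  set (A := Pg*D/H). set (B := ga - be).
  set (T := delta*N/H).
  assert (HAH : A*H = Pg*D) by (unfold A; field; lra).
  assert (HAA : A*A = Pg*Pg).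
  { unfold A. replace (Pg*D/H*(Pg*D/H)) with (Pg*Pg*(D*D)/(H*H)) by (field; lra).
    rewrite HHH. field. auto. }
  assert (Sqp : dot (vsub (q1,q2) (p1,p2)) (vsub (q1,q2) (p1,p2)) * N = X*X+H*H).
  { rewrite HHH. unfold dot, vsub, X, N, D, e1, e2; simpl. ring. }
  assert (Spq : dot (vsub (p1,p2) (q1,q2)) (vsub (p1,p2) (q1,q2)) * N = X*X+H*H).
  { rewrite HHH. unfold dot, vsub, X, N, D, e1, e2; simpl. ring. }
  assert (Srp : dot (vsub (r1,r2) (p1,p2)) (vsub (r1,r2) (p1,p2)) * N = Y*Y+H*H).
  { rewrite HHH. unfold dot, vsub, Y, N, D, e1, e2; simpl. ring. }
  assert (Spr : dot (vsub (p1,p2) (r1,r2)) (vsub (p1,p2) (r1,r2)) * N = Y*Y+H*H).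
  { rewrite HHH. unfold dot, vsub, Y, N, D, e1, e2; simpl. ring. }
  assert (Srq : dot (vsub (r1,r2) (q1,q2)) (vsub (r1,r2) (q1,q2)) * N = N*N).
  { unfold dot, vsub, N, e1, e2; simpl. ring. }
  assert (Sqr : dot (vsub (q1,q2) (r1,r2)) (vsub (q1,q2) (r1,r2)) * N = N*N).
  { unfold dot, vsub, N, e1, e2; simpl. ring. }
  assert (Hpos : forall P Q : pt, 0 < dot (vsub P Q) (vsub P Q) -> 0 < vnorm (vsub P Q)).
  { intros P Q HP. unfold vnorm. apply sqrt_lt_R0. auto. }
  assert (Pqp : 0 < dot (vsub (q1,q2) (p1,p2)) (vsub (q1,q2) (p1,p2))).
  { apply (Rmult_lt_reg_r N); [auto|]. rewrite Sqp. nra. }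
  assert (Ppq : 0 < dot (vsub (p1,p2) (q1,q2)) (vsub (p1,p2) (q1,q2))).
  { apply (Rmult_lt_reg_r N); [auto|]. rewrite Spq. nra. }
  assert (Prp : 0 < dot (vsub (r1,r2) (p1,p2)) (vsub (r1,r2) (p1,p2))).
  { apply (Rmult_lt_reg_r N); [auto|]. rewrite Srp. nra. }
  assert (Ppr : 0 < dot (vsub (p1,p2) (r1,r2)) (vsub (p1,p2) (r1,r2))).
  { apply (Rmult_lt_reg_r N); [auto|]. rewrite Spr. nra. }
  assert (Prq : 0 < dot (vsub (r1,r2) (q1,q2)) (vsub (r1,r2) (q1,q2))).
  { apply (Rmult_lt_reg_r N); [auto|]. rewrite Srq. nra. }
  assert (Pqr : 0 < dot (vsub (q1,q2) (r1,r2)) (vsub (q1,q2) (r1,r2))).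
  { apply (Rmult_lt_reg_r N); [auto|]. rewrite Sqr. nra. }
  assert (HKH : K*K*(D*D)*N = K*K*(H*H)*(L*L)) by (rewrite HHH, HLL; ring).
  assert (HN0 : 0 <= N) by lra.
  assert (Apqr : area2 (p1,p2) (q1,q2) (r1,r2) * area2 (p1,p2) (q1,q2) (r1,r2) = D*D) by (rewrite HDd; ring).
  assert (Aprq : area2 (p1,p2) (r1,r2) (q1,q2) * area2 (p1,p2) (r1,r2) (q1,q2) = D*D) by (unfold area2, cross, vsub, D; simpl; ring).
  assert (Aqpr : area2 (q1,q2) (p1,p2) (r1,r2) * area2 (q1,q2) (p1,p2) (r1,r2) = D*D) by (unfold area2, cross, vsub, D; simpl; ring).
  assert (Aqrp : area2 (q1,q2) (r1,r2) (p1,p2) * area2 (q1,q2) (r1,r2) (p1,p2) = D*D) by (unfold area2, cross, vsub, D; simpl; ring).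
  assert (Arpq : area2 (r1,r2) (p1,p2) (q1,q2) * area2 (r1,r2) (p1,p2) (q1,q2) = D*D) by (unfold area2, cross, vsub, D; simpl; ring).
  assert (Arqp : area2 (r1,r2) (q1,q2) (p1,p2) * area2 (r1,r2) (q1,q2) (p1,p2) = D*D) by (unfold area2, cross, vsub, D; simpl; ring).
  assert (Hcases :
   ((be*be*(Y*Y+H*H) <= K*K*(H*H)*(L*L) /\ ga*ga*(X*X+H*H) <= K*K*(H*H)*(L*L)) \/
   (be*be*(L*L) <= K*K*(H*H) /\ B*B*(X*X+H*H) <= K*K*(H*H)*(L*L)) \/
   (ga*ga*(L*L) <= K*K*(H*H) /\ B*B*(Y*Y+H*H) <= K*K*(H*H)*(L*L)))).
  { assert (Dqr : dot (vsub (q1,q2) (r1,r2)) (vsub (q1,q2) (r1,r2)) = N) by (unfold dot, vsub, N, e1, e2; simpl; ring).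
    assert (Drq : dot (vsub (r1,r2) (q1,q2)) (vsub (r1,r2) (q1,q2)) = N) by (unfold dot, vsub, N, e1, e2; simpl; ring).
    destruct Hprog as [Hc|[Hc|[Hc|[Hc|[Hc|Hc]]]]].
    - destruct (prog_sq _ _ _ _ _ _ _ _ _ Hs He1 (Hpos _ _ Ppr) (Hpos _ _ Pqp) Hc) as [h1 h2].
      fold K in h1, h2. rewrite Apqr in h1, h2. left. split.
      + rewrite <- HKH. apply (conv' _ _ _ _ _ _ h1 Spr HN0). unfold be; ring.
      + rewrite <- HKH. apply (conv' _ _ _ _ _ _ h2 Sqp HN0). unfold ga; ring.
    - destruct (prog_sq _ _ _ _ _ _ _ _ _ Hs He1 (Hpos _ _ Ppq) (Hpos _ _ Prp) Hc) as [h1 h2].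
      fold K in h1, h2. rewrite Aprq in h1, h2. left. split.
      + rewrite <- HKH. apply (conv' _ _ _ _ _ _ h2 Srp HN0). unfold be; ring.
      + rewrite <- HKH. apply (conv' _ _ _ _ _ _ h1 Spq HN0). unfold ga; ring.
    - destruct (prog_sq _ _ _ _ _ _ _ _ _ Hs He1 (Hpos _ _ Pqr) (Hpos _ _ Ppq) Hc) as [h1 h2].
      fold K in h1, h2. rewrite Aqpr in h1, h2. right; left. split.
      + rewrite HLL, HHH. rewrite Dqr in h1. replace (be*be) with ((tq-tp)*(tq-tp)) by (unfold be; ring). exact h1.
      + rewrite <- HKH. apply (conv' _ _ _ _ _ _ h2 Spq HN0). unfold B, ga, be; ring.
    - destruct (prog_sq _ _ _ _ _ _ _ _ _ Hs He1 (Hpos _ _ Pqp) (Hpos _ _ Prq) Hc) as [h1 h2].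
      fold K in h1, h2. rewrite Aqrp in h1, h2. right; left. split.
      + rewrite HLL, HHH. rewrite Drq in h2. replace (be*be) with ((tq-tp)*(tq-tp)) by (unfold be; ring). exact h2.
      + rewrite <- HKH. apply (conv' _ _ _ _ _ _ h1 Sqp HN0). unfold B, ga, be; ring.
    - destruct (prog_sq _ _ _ _ _ _ _ _ _ Hs He1 (Hpos _ _ Prq) (Hpos _ _ Ppr) Hc) as [h1 h2].
      fold K in h1, h2. rewrite Arpq in h1, h2. right; right. split.
      + rewrite HLL, HHH. rewrite Drq in h1. replace (ga*ga) with ((tr-tp)*(tr-tp)) by (unfold ga; ring). exact h1.
      + rewrite <- HKH. apply (conv' _ _ _ _ _ _ h2 Spr HN0). unfold B, ga, be; ring.
    - destruct (prog_sq _ _ _ _ _ _ _ _ _ Hs He1 (Hpos _ _ Prp) (Hpos _ _ Pqr) Hc) as [h1 h2].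
      fold K in h1, h2. rewrite Arqp in h1, h2. right; right. split.
      + rewrite HLL, HHH. rewrite Dqr in h2. replace (ga*ga) with ((tr-tp)*(tr-tp)) by (unfold ga; ring). exact h2.
      + rewrite <- HKH. apply (conv' _ _ _ _ _ _ h1 Srp HN0). unfold B, ga, be; ring. }
  assert (Hcore : (A+T)*(A+T)+B*B < ((K+E)*L)*((K+E)*L)).
  { apply (core K E L H X Y A B T be ga); auto.
    - rewrite HLL. unfold Y, X, N, e1, e2. ring.
    - rewrite HAH, HLL. change B with (ga - be). rewrite <- HBg. unfold Bg, X, Pg, N, D. rewrite <- Fu. unfold e1, e2. ring.
    - unfold be; lra.
    - unfold be, ga; lra.
    - rewrite HAA. change B with (ga - be). rewrite <- HBg.
      rewrite Hgr in Hg. unfold vnorm, dot in Hg; simpl in Hg.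
      assert (HG : G1*G1+G2*G2 < sigma*sigma).
      { assert (0 <= G1*G1+G2*G2) by nra.
        rewrite <- (sqrt_sqrt (G1*G1+G2*G2)); auto.
        assert (0 <= sqrt (G1*G1+G2*G2)) by apply sqrt_pos. nra. }
      replace (Pg*Pg + Bg*Bg) with ((G1*G1+G2*G2)*N) by (unfold Pg, Bg, N; ring).
      replace ((K+E)*L*((K+E)*L)) with (sigma*sigma*(L*L)) by (unfold K, E; ring).
      rewrite HLL. apply Rmult_lt_compat_r; auto.
    - assert (Hdl : dist_line (p1,p2) (q1,q2) (r1,r2) = H/L).
      { unfold dist_line, vnorm, dot, cross, vsub, H, L, N, D, e1, e2; simpl.
        replace ((r1 - q1) * (p2 - q2) - (r2 - q2) * (p1 - q1)) with
          ((q1 - p1) * (r2 - p2) - (q2 - p2) * (r1 - p1)) by ring. reflexivity. }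
      rewrite Hdl in Hd1. unfold T. split.
      + apply div_nonneg; nra.
      + apply (Rmult_le_reg_r H); auto.
        replace (delta*N/H*H) with (delta*N) by (field; lra).
        assert (delta*L <= eps*sigma*H).
        { apply (Rmult_le_compat_r L) in Hd1; [|lra].
          replace (eps*sigma*(H/L)*L) with (eps*sigma*H) in Hd1 by (field; lra). lra. }
        rewrite <- HLL. unfold E. nra. }
  set (G1' := G1 - delta*e2/D). set (G2' := G2 + delta*e1/D).
  assert (Hgr' : grad (p1,p2) (q1,q2) (r1,r2) (tp+delta) tq tr = (G1',G2')).
  { unfold grad, G1', G2', G1, G2, area2, cross, vsub, be, ga, e1, e2, D; simpl.
    f_equal; field; auto. }
  rewrite Hgr'. unfold vnorm, dot; simpl.
  assert (Hid : (G1'*G1'+G2'*G2')*N = (A+T)*(A+T)+B*B).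
  { assert (HAT : A+T = (Pg*D + delta*N)/H) by (unfold A, T; field; lra).
    rewrite HAT. change B with (ga - be). rewrite <- HBg.
    replace ((Pg*D + delta*N)/H*((Pg*D + delta*N)/H)) with ((Pg*D + delta*N)*(Pg*D + delta*N)/(H*H)) by (field; lra).
    rewrite HHH. unfold G1', G2', Pg, Bg, N. field. auto. }
  assert (HG' : G1'*G1'+G2'*G2' < sigma*sigma).
  { apply (Rmult_lt_reg_r N); auto. rewrite Hid.
    replace (sigma*sigma*N) with ((K+E)*L*((K+E)*L)) by (rewrite <- HLL; unfold K, E; ring). auto. }
  rewrite <- (sqrt_square sigma) by lra.
  apply sqrt_lt_1_alt. split; [nra|auto].
Qed.
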